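(* Let $\mathfrak A$ be an associative $\mathcal A$-algebra with finite basis $B$ compatible with $1$ satisfying $P_1,P_2,P_3$, and let $\Phi:\mathfrak A\to\mathcal A\otimes_{\mathbb Z}\mathfrak A^\infty$ be as below (an $\mathcal A$-algebra homomorphism preserving $1$). Let $K$ be a field and $\mathcal A\to K$ a unital ring homomorphism; let $\Phi_K:\mathfrak A_K=K\otimes_{\mathcal A}\mathfrak A\to\mathfrak A^\infty_K=K\otimes_{\mathbb Z}\mathfrak A^\infty$ be the induced $K$-algebra homomorphism. If $\mathfrak A_K$ is a semisimple algebra, then $\Phi_K$ is an algebra isomorphism.
   Context: $\mathcal A=\mathbb Z[v,v^{-1}]$. $B$ compatible with $1$: $1=\sum_\mu1_\mu$ with distinct $1_\mu\in B$, orthogonal idempotents, and each $b\in B$ equal to $1_\mu b1_{\mu'}$ for some $\mu,\mu'$. Structure constants $r^{b''}_{b,b'}$ by $bb'=\sum r^{b''}_{b,b'}b''$. $b'\preceq b$ iff $b'$ lies in every $K\subset B$ containing $b$ whose $\mathcal A$-span is a two-sided ideal; two-sided cells: classes of $b\sim b'\iff b\preceq b'\preceq b$. $a(b)$: least $m\ge0$ with $v^{-m}r^{b''}_{b,b'}\in\mathbb Z[v^{-1}]$ for all $b',b''$ in the cell of $b$. $P_1$: $a$ constant on cells. $\mathfrak A^\infty$: ring with $\mathbb Z$-basis $t_b$, $t_bt_{b'}=\sum\gamma^{b''}_{b,b'}t_{b''}$ where $\gamma^{b''}_{b,b'}$ is the constant term of $v^{-a(b)}r^{b''}_{b,b'}$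 if $b,b',b''$ lie in one cell and $0$ otherwise. $P_2$: $\mathfrak A^\infty$ has unit $\sum_{b\in\mathcal D}t_b$, $\mathcal D\subset B$ (distinguished elements), compatible with the basis. $P_3$: for $b_2\sim b_4$, $\sum_{\beta\sim b_2}r^\beta_{b_1,b_2}(v)r^{b_4}_{\beta,b_3}(v')=\sum_{\beta\sim b_2}r^{b_4}_{b_1,\beta}(v)r^\beta_{b_2,b_3}(v')$. $\Phi(b)=\sum_{b_1\in\mathcal D,b_2\in B,b_1\sim b_2}r^{b_2}_{b,b_1}t_{b_2}$, extended $\mathcal A$-linearly. *)

(* Defs.v *)
From HB Require Import structures.
From mathcomp Require Import all_boot all_order all_algebra.
From mathcomp Require Import finmap.
Set Implicit Arguments.
Unset Strict Implicit.
Unset Printing Implicit Defensive.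
Import Order.TTheory GRing.Theory Num.Theory.
Local Open Scope ring_scope.


(* The ring  A = Z[v, v^{-1}].  A Laurent polynomial  f = sum_n f_n v^n  is  *)
(* encoded by its finitely supported coefficient function  n |-> f_n.       *)
Definition laurent := {fsfun int -> int with 0%R}.

Definition lmul (f g : laurent) (n : int) : int :=
  \sum_(i <- finsupp f) f i * g (n - i).

(* image of f under the unital ring homomorphism  A -> K,  v |-> u
   (every unital ring hom Z[v,v^-1] -> K is of this form, u a unit of K) *)
Definition lev (K : fieldType) (u : K) (f : laurent) : K :=
  \sum_(i <- finsupp f) (f i)%:~R * u ^ i.

Section Based.
Variable B : finType.
(* structure constants:  b * b' = sum_{b''} r b b' b'' . b''  *)
Variable r : B -> B -> B -> laurent.

Definition associative_sc : Prop :=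
  forall b b' b'' c (n : int),
    \sum_(be : B) lmul (r b b' be) (r be b'' c) n
    = \sum_(be : B) lmul (r b' b'' be) (r b be c) n.

(* B is compatible with 1:  1 = sum_{e in U} e  (the 1_mu are the distinct
   elements of U), the 1_mu are orthogonal idempotents, and every b equals
   1_mu b 1_mu' for some mu, mu'. *)
Definition compatible_with_one (U : {set B}) : Prop :=
  [/\ (forall b c (n : int),
         \sum_(e in U) r e b c n = ((c == b) && (n == 0))%:R),
      (forall b c (n : int),
         \sum_(e in U) r b e c n = ((c == b) && (n == 0))%:R),
      (forall e e' c (n : int), e \in U -> e' \in U ->
         r e e' c n = [&& e == e', c == e & n == 0]%:R) &
      (forall b, exists e, exists e', [/\ e \in U, e' \in U &
         (* e * (b * e') = b *)
         forall c (n : int),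
           \sum_(be : B) lmul (r b e' be) (r e be c) n
           = ((c == b) && (n == 0))%:R])].

Definition lzero (f : laurent) : bool := finsupp f == fset0 :> {fset int}.

(* the A-span of K is a two-sided ideal (checked on the basis: K.B and B.K
   lie in the span of K) *)
Definition span_ideal (K : {set B}) : bool :=
  [forall x, forall y, forall c, (x \in K) && (c \notin K) ==>
     lzero (r x y c) && lzero (r y x c)].

Definition preceq (b' b : B) : bool :=
  [forall K : {set B}, (b \in K) && span_ideal K ==> (b' \in K)].

Definition same_cell (b b' : B) : bool := preceq b b' && preceq b' b.

(* v^{-m} r^{b''}_{b,b'} lies in Z[v^{-1}] for all b', b'' in the cell of b *)
Definition a_bound (m : nat) (b : B) : Prop :=
  forall b' b'' (n : int), same_cell b b' -> same_cell b b'' ->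
    (m%:Z < n) -> r b b' b'' n = 0.

Definition is_a_function (a : B -> nat) : Prop :=
  forall b, a_bound (a b) b /\ (forall m, a_bound m b -> (a b <= m)%N).

Definition P1 (a : B -> nat) : Prop :=
  forall b b', same_cell b b' -> a b = a b'.

(* gamma^{b''}_{b,b'} : constant term of v^{-a(b)} r^{b''}_{b,b'} if
   b, b', b'' lie in one cell, 0 otherwise *)
Definition gamma (a : B -> nat) (b b' b'' : B) : int :=
  if same_cell b b' && same_cell b b'' then r b b' b'' (a b)%:Z else 0.

(* P2: the ring A^infty (Z-basis t_b, structure constants gamma) has unit
   sum_{d in D} t_d, and the basis {t_b} is compatible with this unit. *)
Definition P2 (a : B -> nat) (D : {set B}) : Prop :=
  [/\ (forall b c, \sum_(d in D) gamma a d b c = (c == b)%:R),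
      (forall b c, \sum_(d in D) gamma a b d c = (c == b)%:R),
      (forall d d' c, d \in D -> d' \in D ->
         gamma a d d' c = ((d == d') && (c == d))%:R) &
      (forall b, exists d, exists d', [/\ d \in D, d' \in D &
         forall c, \sum_(be : B) gamma a b d' be * gamma a d be c
                   = (c == b)%:R])].

(* P3, as an identity in Z[v,v^-1,v',v'^-1], compared coefficientwise
   (coefficient of v^i v'^j) *)
Definition P3 : Prop :=
  forall b1 b2 b3 b4, same_cell b2 b4 -> forall i j : int,
    \sum_(be : B | same_cell be b2) r b1 b2 be i * r be b3 b4 j
    = \sum_(be : B | same_cell be b2) r b1 be b4 i * r b2 b3 be j.

Variable K : fieldType.
Variable u : K.

(* A_K = K (x)_A A : elements are K-linear combinations of the basis B *)
Definition mulK (x y : {ffun B -> K}) : {ffun B -> K} :=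
  [ffun c => \sum_(b : B) \sum_(b' : B) x b * y b' * lev u (r b b' c)].
Definition oneK (U : {set B}) : {ffun B -> K} := [ffun b => (b \in U)%:R].

(* A^infty_K = K (x)_Z A^infty : basis t_b *)
Definition mulInf (a : B -> nat) (x y : {ffun B -> K}) : {ffun B -> K} :=
  [ffun c => \sum_(b : B) \sum_(b' : B) x b * y b' * (gamma a b b' c)%:~R].
Definition oneInf (D : {set B}) : {ffun B -> K} := [ffun b => (b \in D)%:R].

Definition PhiK (D : {set B}) (x : {ffun B -> K}) : {ffun B -> K} :=
  [ffun c => \sum_(b : B) x b *
               \sum_(d in D | same_cell d c) lev u (r b d c)].

Definition left_idealK (I : {ffun B -> K} -> Prop) : Prop :=
  [/\ I 0, (forall x y, I x -> I y -> I (x + y)),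
      (forall (k : K) x, I x -> I [ffun b => k * x b]) &
      (forall x y, I y -> I (mulK x y))].

Definition semisimpleK : Prop :=
  forall I, left_idealK I -> exists J, [/\ left_idealK J,
    (forall x, I x -> J x -> x = 0) &
    (forall x, exists y z, [/\ I y, J z & x = y + z])].

End Based.

(* Main.v *)
Require Import Defs.
From HB Require Import structures.
From mathcomp Require Import all_boot all_order all_algebra.
From mathcomp Require Import finmap.
From mathcomp Require Import ring.
Import Order.TTheory GRing.Theory Num.Theory.
Set Implicit Arguments.
Unset Strict Implicit.
Local Open Scope ring_scope.
Lemma levE (K : fieldType) (u : K) (f : laurent) (S : {fset int}) :
  (finsupp f `<=` S)%fset ->
  lev u f = \sum_(i <- S) (f i)%:~R * u ^ i.
Proof.
move=> sub; rewrite /lev; apply: big_fset_incl => // x _ xn.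
by rewrite fsfun_dflt // mul0r.
Qed.

Lemma shift_sum (K : fieldType) (F : int -> K) (S : {fset int}) (i : int) :
  \sum_(m <- [fset (m + i)%R | m in S]%fset) F m = \sum_(m <- S) F (m + i).
Proof.
rewrite big_imfset /=; last by move=> x y _ _ /addIr.
apply: perm_big; apply: uniq_perm; rewrite ?enum_finmem_uniq ?fset_uniq //.
Qed.

Definition S2 (S0 : {fset int}) : {fset int} :=
  [fset (i + j)%R | i in S0, j in S0]%fset.

Lemma lmulE (K : fieldType) (u : K) (f g : laurent) (S0 : {fset int}) :
  u != 0 -> (finsupp f `<=` S0)%fset -> (finsupp g `<=` S0)%fset ->
  \sum_(n <- S2 S0) (lmul f g n)%:~R * u ^ n = lev u f * lev u g.
Proof.
move=> u0 sf sg; rewrite /lmul /lev.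
under eq_bigr do rewrite rmorph_sum big_distrl /=.
rewrite exchange_big big_distrl /=; apply: eq_big_seq => i isf.
have iS0 : i \in S0 by apply: (fsubsetP sf).
transitivity ((f i)%:~R * u ^ i *
   \sum_(n <- S2 S0) (g (n - i))%:~R * u ^ (n - i)).
  rewrite big_distrr; apply: eq_bigr => n _ /=.
  rewrite intrM -!mulrA; congr (_ * _).
  by rewrite mulrCA -expfzDr // [i + _]addrC subrK.
congr (_ * _).
rewrite -(@shift_sum _ (fun m => (g m)%:~R * u ^ m) _ (- i)).
symmetry; apply: big_fset_incl.
  apply/fsubsetP => m msg; apply/imfsetP; exists (m + i) => /=.
    apply/imfset2P; exists i => //; exists m; first by apply: (fsubsetP sg).
    by rewrite addrC.
  by rewrite addrK.
by move=> x _ xn; rewrite fsfun_dflt // mul0r.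
Qed.

Definition Sr (B : finType) (r : B -> B -> B -> laurent) : {fset int} :=
  (0 |` \bigcup_(t <- enum {: B * B * B}) finsupp (r t.1.1 t.1.2 t.2))%fset.

Lemma Sr_sub (B : finType) (r : B -> B -> B -> laurent) b b' c :
  (finsupp (r b b' c) `<=` Sr r)%fset.
Proof.
apply: fsubset_trans (fsubsetUr _ _).
by apply: (bigfcup_sup (j := (b, b', c))) => //; rewrite mem_enum.
Qed.

Lemma Sr0 (B : finType) (r : B -> B -> B -> laurent) : 0 \in Sr r.
Proof. by rewrite !inE eqxx. Qed.

Lemma lev0 (K : fieldType) (u : K) f : lzero f -> lev u f = 0.
Proof. by move/eqP=> e; rewrite /lev e big_seq_fset0. Qed.

Lemma assocK (B : finType) (r : B -> B -> B -> laurent) (K : fieldType) (u : K) :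
  u != 0 -> associative_sc r -> forall b b' b'' c,
  \sum_be lev u (r b b' be) * lev u (r be b'' c)
  = \sum_be lev u (r b' b'' be) * lev u (r b be c).
Proof.
move=> u0 As b b' b'' c.
have E x y z x' y' z' : lev u (r x y z) * lev u (r x' y' z') =
  \sum_(n <- S2 (Sr r)) (lmul (r x y z) (r x' y' z') n)%:~R * u ^ n.
  by rewrite lmulE // Sr_sub.
under eq_bigr do rewrite E.
rewrite exchange_big /=.
under eq_bigr do rewrite -big_distrl /= -rmorph_sum As.
under [RHS]eq_bigr do rewrite E.
rewrite [RHS]exchange_big /=.
by apply: eq_bigr => n _; rewrite -big_distrl /= -rmorph_sum.
Qed.

Lemma P3K (B : finType) (r : B -> B -> B -> laurent) (K : fieldType) (u : K) :
  P3 r -> forall b1 b2 b3 b4, same_cell r b2 b4 -> forall j : int,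
  \sum_(be | same_cell r be b2) lev u (r b1 b2 be) * (r be b3 b4 j)%:~R
  = \sum_(be | same_cell r be b2) lev u (r b1 be b4) * (r b2 b3 be j)%:~R.
Proof.
move=> H b1 b2 b3 b4 c24 j.
have E x y z (k : int) : lev u (r x y z) * k%:~R =
    \sum_(i <- Sr r) (r x y z i * k)%:~R * u ^ i.
  rewrite (levE u (Sr_sub r x y z)) big_distrl /=.
  by apply: eq_bigr => i _; rewrite intrM mulrAC.
under eq_bigr do rewrite E.
under [RHS]eq_bigr do rewrite E.
rewrite exchange_big [RHS]exchange_big /=.
apply: eq_bigr => i _; rewrite -!big_distrl /= -!rmorph_sum.
by rewrite (H b1 b2 b3 b4 c24 i j).
Qed.

Lemma sum_delta0 (K : fieldType) (u : K) (S : {fset int}) (P : bool) :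
  0 \in S ->
  \sum_(i <- S) ((P && (i == 0))%:R : int)%:~R * u ^ i = P%:R.
Proof.
move=> S0; case: P => /=; last by rewrite big1 // => i _; rewrite mul0r.
rewrite (big_fsetD1 0) //= expr0z mulr1 big1_fset ?addr0 //.
by move=> i; rewrite !inE => /andP[/negbTE -> _] _; rewrite mul0r.
Qed.

Lemma unitLK (B : finType) (r : B -> B -> B -> laurent) (K : fieldType) (u : K) U :
  compatible_with_one r U -> forall b c,
  \sum_(e in U) lev u (r e b c) = (c == b)%:R.
Proof.
case=> H _ _ _ b c.
under eq_bigr do rewrite (levE u (Sr_sub r _ _ _)).
rewrite exchange_big /=.
under eq_bigr do rewrite -big_distrl /= -rmorph_sum H.
by rewrite sum_delta0 // Sr0.
Qed.

Lemma unitRK (B : finType) (r : B -> B -> B -> laurent) (K : fieldType) (u : K) U :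
  compatible_with_one r U -> forall b c,
  \sum_(e in U) lev u (r b e c) = (c == b)%:R.
Proof.
case=> _ H _ _ b c.
under eq_bigr do rewrite (levE u (Sr_sub r _ _ _)).
rewrite exchange_big /=.
under eq_bigr do rewrite -big_distrl /= -rmorph_sum H.
by rewrite sum_delta0 // Sr0.
Qed.

Lemma preceq_refl (B : finType) (r : B -> B -> B -> laurent) b : preceq r b b.
Proof. by apply/forallP => X; apply/implyP => /andP[]. Qed.

Lemma preceq_trans (B : finType) (r : B -> B -> B -> laurent) x y z :
  preceq r x y -> preceq r y z -> preceq r x z.
Proof.
move=> /forallP Hxy /forallP Hyz; apply/forallP => X; apply/implyP => /andP[zX iX].
have := implyP (Hyz X); rewrite zX iX => /(_ isT) yX.
by have := implyP (Hxy X); rewrite yX iX => /(_ isT).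
Qed.

Lemma same_cell_refl (B : finType) (r : B -> B -> B -> laurent) b : same_cell r b b.
Proof. by rewrite /same_cell preceq_refl. Qed.

Lemma same_cell_sym (B : finType) (r : B -> B -> B -> laurent) x y :
  same_cell r x y = same_cell r y x.
Proof. by rewrite /same_cell andbC. Qed.

Lemma same_cell_trans (B : finType) (r : B -> B -> B -> laurent) x y z :
  same_cell r x y -> same_cell r y z -> same_cell r x z.
Proof.
case/andP=> h1 h2 /andP[h3 h4]; apply/andP; split; [exact: (preceq_trans h1 h3)|exact: (preceq_trans h4 h2)].
Qed.

Lemma lev_nz (B : finType) (r : B -> B -> B -> laurent) (K : fieldType) (u : K) x y c :
  lev u (r x y c) != 0 -> preceq r c x && preceq r c y.
Proof.
move=> nz; apply/andP; split; apply/forallP => X; apply/implyP => /andP[iX sX];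
  apply/negPn/negP => cX; move: nz; rewrite lev0 ?eqxx //.
  by have /andP[] := implyP (forallP (forallP (forallP sX x) y) c) (introT andP (conj iX cX)).
by have /andP[] := implyP (forallP (forallP (forallP sX y) x) c) (introT andP (conj iX cX)).
Qed.

Lemma gammaE (B : finType) (r : B -> B -> B -> laurent) a (x y z : B) :
  P1 r a -> same_cell r x y -> same_cell r x z -> forall w, same_cell r x w ->
  gamma r a x y z = r x y z (a w).
Proof.
by move=> HP1 xy xz w xw; rewrite /gamma xy xz (HP1 _ _ xw).
Qed.

Lemma gamma0 (B : finType) (r : B -> B -> B -> laurent) a (x y z : B) :
  ~~ (same_cell r x y && same_cell r x z) -> gamma r a x y z = 0.
Proof. by rewrite /gamma => /negbTE ->. Qed.

Lemma identI (B : finType) (r : B -> B -> B -> laurent) a D (K : fieldType) (u : K) :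
  P1 r a -> P2 r a D -> P3 r -> forall b1 bt w, same_cell r bt w ->
  lev u (r b1 bt w) = \sum_z (\sum_(d in D | same_cell r d z) lev u (r b1 d z))
                          * (gamma r a z bt w)%:~R.
Proof.
move=> HP1 [HP2 _ _ _] HP3 b1 bt w btw.
have wbt : same_cell r w bt by rewrite same_cell_sym.
have step d : d \in D -> same_cell r d w ->
  \sum_(z | same_cell r z w) lev u (r b1 d z) * (gamma r a z bt w)%:~R
  = \sum_(z | same_cell r z w) lev u (r b1 z w) * (gamma r a d bt z)%:~R.
  move=> dD dw; have := @P3K B r K u HP3 b1 d bt w dw (a w)%:Z.
  have E z : same_cell r z d = same_cell r z w.
    apply/idP/idP => h; first exact: same_cell_trans h dw.
    by apply: same_cell_trans h _; rewrite same_cell_sym.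
  have EE (F : B -> K) : \sum_(z | same_cell r z d) F z = \sum_(z | same_cell r z w) F z.
    by apply: eq_bigl.
  rewrite !EE => H; etransitivity; [|etransitivity; [exact: H|]];
    apply: eq_bigr => z zw; congr (_ * _%:~R).
  - rewrite (gammaE HP1 (same_cell_trans zw wbt) zw (same_cell_refl r z)).
    by rewrite (HP1 _ _ zw).
  - rewrite (gammaE HP1 (same_cell_trans dw wbt) (same_cell_trans dw _) dw) //.
    by rewrite same_cell_sym.
transitivity (\sum_(z | same_cell r z w) lev u (r b1 z w) *
     (\sum_(d in D) gamma r a d bt z)%:~R).
  under eq_bigr do rewrite HP2.
  rewrite (bigD1 bt) //= eqxx mulr1 big1 ?addr0 // => z /andP[_ /negbTE ->].
  by rewrite mulr0.
transitivity (\sum_(z | same_cell r z w) \sum_(d in D | same_cell r d w)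
     lev u (r b1 z w) * (gamma r a d bt z)%:~R).
  apply: eq_bigr => z zw; rewrite rmorph_sum big_distrr /=.
  rewrite (bigID (fun d => same_cell r d w)) /= [X in _ + X]big1 ?addr0 //.
  move=> d /andP[_ dnw]; rewrite gamma0 ?mulr0 //.
  apply: contra dnw => /andP[dbt _]; exact: same_cell_trans dbt btw.
rewrite exchange_big /=.
transitivity (\sum_(d in D | same_cell r d w) \sum_(z | same_cell r z w)
     lev u (r b1 d z) * (gamma r a z bt w)%:~R).
  by apply: eq_bigr => d /andP[dD dw]; rewrite step.
rewrite exchange_big /=.
rewrite [RHS](bigID (fun z => same_cell r z w)) /= [X in _ = _ + X]big1 ?addr0.
  apply: eq_bigr => z zw; rewrite big_distrl /=; apply: eq_bigl => d.
  congr (_ && _); apply/idP/idP => h.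
    by apply: same_cell_trans h _; rewrite same_cell_sym.
  exact: same_cell_trans h zw.
move=> z znw; rewrite gamma0 ?mulr0 //.
by apply: contra znw => /andP[].
Qed.

Lemma homT (B : finType) (r : B -> B -> B -> laurent) a D (K : fieldType) (u : K) :
  u != 0 -> associative_sc r -> P1 r a -> P2 r a D -> P3 r -> forall b b' w,
  \sum_c lev u (r b b' c) * (\sum_(d in D | same_cell r d w) lev u (r c d w))
  = \sum_z \sum_bt (\sum_(d in D | same_cell r d z) lev u (r b d z)) *
       (\sum_(d in D | same_cell r d bt) lev u (r b' d bt)) * (gamma r a z bt w)%:~R.
Proof.
move=> u0 As HP1 HP2 HP3 b b' w.
pose S bt := \sum_z (\sum_(d in D | same_cell r d z) lev u (r b d z)) * (gamma r a z bt w)%:~R.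
transitivity (\sum_(d in D | same_cell r d w) \sum_(bt | same_cell r bt w)
                lev u (r b' d bt) * S bt).
  under eq_bigr do rewrite big_distrr /=.
  rewrite exchange_big /=; apply: eq_bigr => d /andP[dD dw].
  rewrite (assocK u0 As b b' d w).
  rewrite (bigID (fun bt => same_cell r bt w)) /= [X in _ + X]big1 ?addr0.
    by apply: eq_bigr => bt btw; rewrite /S -(@identI B r a D K u HP1 HP2 HP3 b bt w btw).
  move=> bt btnw; apply/eqP; rewrite mulf_eq0; apply/orP.
  case: (boolP (lev u (r b' d bt) == 0)) => [h|h1]; first by left.
  right; apply/negPn/negP => h2.
  move/lev_nz: h1 => /andP[_ btd]; move/lev_nz: h2 => /andP[_ wbt].
  apply: (negP btnw); rewrite /same_cell wbt andbT.
  by apply: preceq_trans btd _; case/andP: dw.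
rewrite exchange_big /= [RHS]exchange_big /=.
rewrite [RHS](bigID (fun bt => same_cell r bt w)) /= [X in _ = _ + X]big1 ?addr0.
  apply: eq_bigr => bt btw; rewrite -big_distrl /=.
  have E : forall d, same_cell r d bt = same_cell r d w.
    move=> d; apply/idP/idP => h; first exact: same_cell_trans h btw.
    by apply: same_cell_trans h _; rewrite same_cell_sym.
  have EE (F : B -> K) : \sum_(d in D | same_cell r d bt) F d = \sum_(d in D | same_cell r d w) F d.
    by apply: eq_bigl => d; rewrite E.
  rewrite /S big_distrr /=; apply: eq_bigr => z _.
  by rewrite EE mulrCA mulrA.
move=> bt btnw; apply: big1 => z _; rewrite gamma0 ?mulr0 //.
apply: contra btnw => /andP[zbt zw].
by apply: same_cell_trans zw; rewrite same_cell_sym.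
Qed.

Lemma PhiK_hom (B : finType) (r : B -> B -> B -> laurent) a D (K : fieldType) (u : K) :
  u != 0 -> associative_sc r -> P1 r a -> P2 r a D -> P3 r -> forall x y,
  PhiK r u D (mulK r u x y) = mulInf r a (PhiK r u D x) (PhiK r u D y).
Proof.
move=> u0 As HP1 HP2 HP3 x y; apply/ffunP => w; rewrite !ffunE.
transitivity (\sum_b \sum_b' x b * y b' *
  \sum_c lev u (r b b' c) * (\sum_(d in D | same_cell r d w) lev u (r c d w))).
  under eq_bigr do rewrite ffunE big_distrl /=.
  rewrite exchange_big /=; apply: eq_bigr => b _.
  under eq_bigr do rewrite big_distrl /=.
  rewrite exchange_big /=; apply: eq_bigr => b' _.
  by rewrite big_distrr /=; apply: eq_bigr => c _; rewrite mulrA.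
under eq_bigr do under eq_bigr do rewrite (homT u0 As HP1 HP2 HP3).
transitivity (\sum_z \sum_bt \sum_b \sum_b' x b * y b' *
  ((\sum_(d in D | same_cell r d z) lev u (r b d z)) *
   (\sum_(d in D | same_cell r d bt) lev u (r b' d bt)) * (gamma r a z bt w)%:~R)).
  have e1 b : \sum_b' x b * y b' * \sum_z \sum_bt
     (\sum_(d in D | same_cell r d z) lev u (r b d z)) *
     (\sum_(d in D | same_cell r d bt) lev u (r b' d bt)) * (gamma r a z bt w)%:~R
    = \sum_z \sum_bt \sum_b' x b * y b' *
     ((\sum_(d in D | same_cell r d z) lev u (r b d z)) *
     (\sum_(d in D | same_cell r d bt) lev u (r b' d bt)) * (gamma r a z bt w)%:~R).
    under eq_bigr do rewrite big_distrr /=.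
    rewrite exchange_big /=; apply: eq_bigr => z _.
    under eq_bigr do rewrite big_distrr /=.
    by rewrite exchange_big.
  under eq_bigr do rewrite e1.
  rewrite exchange_big /=; apply: eq_bigr => z _.
  by rewrite exchange_big.
apply: eq_bigr => z _; apply: eq_bigr => bt _.
rewrite !ffunE big_distrl big_distrl /=; apply: eq_bigr => b _.
rewrite big_distrr big_distrl /=; apply: eq_bigr => b' _.
by ring.
Qed.

Definition rho (B : finType) (r : B -> B -> B -> laurent) (w : B) : nat :=
  #|[set w' | preceq r w' w && ~~ preceq r w w']|.

Lemma rho_lt (B : finType) (r : B -> B -> B -> laurent) w b :
  preceq r w b -> ~~ preceq r b w -> (rho r w < rho r b)%N.
Proof.
move=> wb bw; apply: proper_card; apply/properP; split.
  apply/subsetP => w'; rewrite !inE => /andP[w'w ww'].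
  rewrite (preceq_trans w'w wb) /=; apply: contra bw => bw'.
  exact: preceq_trans bw' w'w.
by exists w; rewrite !inE ?wb ?bw ?preceq_refl.
Qed.

Lemma rho_le (B : finType) (r : B -> B -> B -> laurent) w : (rho r w <= #|B|)%N.
Proof. exact: max_card. Qed.

Definition Sup (B : finType) (r : B -> B -> B -> laurent) (K : fieldType)
  (k : nat) (y : {ffun B -> K}) := forall b, (k <= rho r b)%N -> y b = 0.

Lemma decS (B : finType) (r : B -> B -> B -> laurent) a D (K : fieldType) (u : K) :
  P1 r a -> P2 r a D -> P3 r -> forall x y k,
  PhiK r u D x = 0 -> Sup r (k.+1) y -> Sup r k (mulK r u x y).
Proof.
move=> HP1 HP2 HP3 x y k Px Sy w kw; rewrite ffunE exchange_big /=.
apply: big1 => b' _.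
case: (boolP (y b' == 0)) => [/eqP y0|yn0].
  by apply: big1 => b _; rewrite y0 mulr0 mul0r.
have b'k : (rho r b' <= k)%N.
  by rewrite leqNgt; apply: contra yn0 => h; apply/eqP/Sy.
case: (boolP (preceq r w b')) => wb; last first.
  apply: big1 => b _; rewrite (_ : lev u (r b b' w) = 0) ?mulr0 //.
  apply/eqP; apply: contraR wb => /lev_nz /andP[_ ->] //.
case: (boolP (preceq r b' w)) => bw; last first.
  by have := rho_lt wb bw; rewrite ltnNge (leq_trans b'k kw).
have b'w : same_cell r b' w by rewrite /same_cell bw wb.
have Pz z : \sum_b x b * (\sum_(d in D | same_cell r d z) lev u (r b d z)) = 0.
  by have := congr1 (fun f : {ffun B -> K} => f z) Px; rewrite !ffunE.
transitivity (y b' * \sum_b x b * lev u (r b b' w)).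
  by rewrite big_distrr /=; apply: eq_bigr => b _; ring.
rewrite (eq_bigr (fun b => x b * \sum_z (\sum_(d in D | same_cell r d z) lev u (r b d z))
                          * (gamma r a z b' w)%:~R)); last first.
  by move=> b _; rewrite (@identI B r a D K u HP1 HP2 HP3 b b' w b'w).
rewrite (eq_bigr (fun b => \sum_z x b * (\sum_(d in D | same_cell r d z) lev u (r b d z))
                          * (gamma r a z b' w)%:~R)); last first.
  by move=> b _; rewrite big_distrr /=; apply: eq_bigr => z _; rewrite mulrA.
rewrite exchange_big big1 ?mulr0 // => z _.
by rewrite -big_distrl /= Pz mul0r.
Qed.

Lemma nilpK (B : finType) (r : B -> B -> B -> laurent) a D (K : fieldType) (u : K) :
  P1 r a -> P2 r a D -> P3 r -> forall e : {ffun B -> K},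
  PhiK r u D e = 0 -> e = mulK r u e e -> e = 0.
Proof.
move=> HP1 HP2 HP3 e Pe ee.
have H n : Sup r (#|B|.+1 - n) (iter n (mulK r u e) e).
  elim: n => [|n IH] /=.
    by move=> b; rewrite subn0 ltnNge rho_le.
  apply: (decS HP1 HP2 HP3 Pe).
  case: (leqP n #|B|) => hn.
    by rewrite subnSK.
  by move=> b h; apply: IH; rewrite (eqP (_ : #|B|.+1 - n == 0)%N) // subn_eq0.
have E n : iter n (mulK r u e) e = e.
  by elim: n => [|n IH] //=; rewrite IH -ee.
apply/ffunP => b; rewrite ffunE -(E #|B|.+1); apply: H; rewrite subnn.
by [].
Qed.

Lemma inj_bij (B : finType) (K : fieldType) (f : {ffun B -> K^o} -> {ffun B -> K^o}) :
  (forall k x y, f (k *: x + y) = k *: f x + f y) -> injective f -> bijective f.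
Proof.
move=> lf inj.
pose fl : {linear {ffun B -> K^o} -> {ffun B -> K^o}} :=
  HB.pack f (GRing.isLinear.Build _ _ _ _ f (fun k => lf k)).
pose g := linfun fl.
have gE : g =1 f by move=> x; rewrite lfunE.
have ginj : injective g by move=> x y; rewrite !gE => /inj.
have sur y : exists x, f x == y.
  have : y \in limg g by rewrite (lker0_limgf (introT lker0P ginj)) memvf.
  by case/memv_imgP => x _ ->; exists x; rewrite gE.
exists (fun y => xchoose (sur y)) => [x|y]; last exact/eqP/(xchooseP (sur y)).
by apply: inj; apply/eqP/(xchooseP (sur (f x))).
Qed.

Lemma PhiK_lin (B : finType) (r : B -> B -> B -> laurent) D (K : fieldType) (u : K)
  (k : K) (x y : {ffun B -> K^o}) :
  PhiK r u D (k *: x + y) = k *: (PhiK r u D x : {ffun B -> K^o}) + PhiK r u D y.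
Proof.
apply/ffunP => c; rewrite !ffunE /= scaler_sumr -big_split /=.
by apply: eq_bigr => b _; rewrite !ffunE /= mulrDl scalerAl.
Qed.

Lemma PhiK_add (B : finType) (r : B -> B -> B -> laurent) D (K : fieldType) (u : K)
  (x y : {ffun B -> K}) : PhiK r u D (x + y) = PhiK r u D x + PhiK r u D y.
Proof. by have := PhiK_lin r D u 1 x y; rewrite !scale1r. Qed.

Lemma PhiK_sub (B : finType) (r : B -> B -> B -> laurent) D (K : fieldType) (u : K)
  (x y : {ffun B -> K}) : PhiK r u D (x - y) = PhiK r u D x - PhiK r u D y.
Proof.
have := PhiK_lin r D u (-1) y x; rewrite !scaleN1r => E.
by rewrite addrC E addrC.
Qed.

Lemma PhiK0 (B : finType) (r : B -> B -> B -> laurent) D (K : fieldType) (u : K) :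
  PhiK r u D 0 = 0.
Proof. by apply/ffunP => c; rewrite !ffunE big1 // => b' _; rewrite ffunE mul0r. Qed.

Lemma PhiK_scale (B : finType) (r : B -> B -> B -> laurent) D (K : fieldType) (u : K)
  (k : K) (x : {ffun B -> K}) :
  PhiK r u D [ffun b => k * x b] = [ffun b => k * PhiK r u D x b].
Proof.
have E := PhiK_lin r D u k x 0.
rewrite (_ : [ffun b => k * x b] = k *: (x : {ffun B -> K^o}) + 0); last first.
  by apply/ffunP => b; rewrite addr0 !ffunE.
rewrite E PhiK0 addr0; apply/ffunP => b; rewrite !ffunE.
by [].
Qed.

Lemma mulK_addr (B : finType) (r : B -> B -> B -> laurent) (K : fieldType) (u : K)
  (x y z : {ffun B -> K}) : mulK r u x (y + z) = mulK r u x y + mulK r u x z.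
Proof.
apply/ffunP => c; rewrite !ffunE -big_split; apply: eq_bigr => b _ /=.
rewrite -big_split; apply: eq_bigr => b' _ /=; rewrite ffunE; ring.
Qed.

Lemma mulK0r (B : finType) (r : B -> B -> B -> laurent) (K : fieldType) (u : K)
  (x : {ffun B -> K}) : mulK r u x 0 = 0.
Proof.
apply/ffunP => c; rewrite !ffunE big1 // => b _; rewrite big1 // => b' _.
by rewrite ffunE mulr0 mul0r.
Qed.

Lemma mulInf0l (B : finType) (r : B -> B -> B -> laurent) a (K : fieldType)
  (y : {ffun B -> K}) : mulInf r a 0 y = 0.
Proof.
apply/ffunP => c; rewrite !ffunE big1 // => b _; rewrite big1 // => b' _.
by rewrite ffunE !mul0r.
Qed.

Lemma mulK_unitr (B : finType) (r : B -> B -> B -> laurent) (K : fieldType) (u : K) U :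
  compatible_with_one r U -> forall x, mulK r u x (oneK K U) = x.
Proof.
move=> HU x; apply/ffunP => c; rewrite ffunE.
transitivity (\sum_b x b * \sum_(e in U) lev u (r b e c)).
  apply: eq_bigr => b _; rewrite big_distrr /= [RHS]big_mkcond /=.
  by apply: eq_bigr => e _; rewrite ffunE; case: (e \in U); rewrite ?mulr1 ?mulr0 ?mul0r.
under eq_bigr do rewrite (unitRK u HU).
rewrite (bigD1 c) //= eqxx mulr1 big1 ?addr0 // => b /negbTE.
by rewrite eq_sym => ->; rewrite mulr0.
Qed.

Lemma PhiK_one (B : finType) (r : B -> B -> B -> laurent) D (K : fieldType) (u : K) U :
  compatible_with_one r U -> PhiK r u D (oneK K U) = oneInf K D.
Proof.
move=> HU; apply/ffunP => c; rewrite !ffunE.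
transitivity (\sum_(d in D | same_cell r d c) \sum_(b in U) lev u (r b d c)).
  rewrite exchange_big /= [RHS]big_mkcond /=; apply: eq_bigr => b _.
  by rewrite ffunE; case: (b \in U); rewrite ?mul1r ?mul0r.
under eq_bigr do rewrite (unitLK u HU).
case: (boolP (c \in D)) => cD.
  rewrite (bigD1 c) /= ?cD ?same_cell_refl // eqxx big1 ?addr0 // => d /andP[_ /negbTE].
  by rewrite eq_sym => ->.
by rewrite big1 // => d /andP[dD _]; case: eqP => // cd; rewrite cd dD in cD.
Qed.

Lemma mulInf0r (B : finType) (r : B -> B -> B -> laurent) a (K : fieldType)
  (x : {ffun B -> K}) : mulInf r a x 0 = 0.
Proof.
apply/ffunP => c; rewrite !ffunE big1 // => b _; rewrite big1 // => b' _.
by rewrite ffunE mulr0 mul0r.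
Qed.

Unset Implicit Arguments.
Set Strict Implicit.
Theorem mainTheorem7 (B : finType) (r : B -> B -> B -> laurent)
    (U : {set B}) (a : B -> nat) (D : {set B})
    (K : fieldType) (u : K) :
  associative_sc r ->
  compatible_with_one r U ->
  is_a_function r a ->
  P1 r a ->
  P2 r a D ->
  P3 r ->
  u != 0 ->
  semisimpleK r u ->
  [/\ bijective (PhiK r u D),
      (forall x y, PhiK r u D (mulK r u x y)
                   = mulInf r a (PhiK r u D x) (PhiK r u D y)) &
      PhiK r u D (oneK K U) = oneInf K D].
Proof.
move=> As HU _ HP1 HP2 HP3 u0 SS.
have hom := PhiK_hom u0 As HP1 HP2 HP3.
split => //; last exact: PhiK_one.
pose N (x : {ffun B -> K}) := PhiK r u D x = 0.
have NI : left_idealK r u N.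
  split; rewrite /N.
  - exact: PhiK0.
  - by move=> x y Nx Ny; rewrite PhiK_add Nx Ny addr0.
  - move=> k x Nx; rewrite PhiK_scale Nx; apply/ffunP => b; rewrite !ffunE; exact: mulr0.
  - by move=> x y Ny; rewrite hom Ny mulInf0r.
have [J [[J0 _ _ JM] NJ dec]] := SS N NI.
have [e [f [Ne Jf ef]]] := dec (oneK K U).
have Nmul x y : N x -> N (mulK r u x y).
  by rewrite /N hom => ->; rewrite mulInf0l.
have eq0 : e = 0.
  apply: (nilpK HP1 HP2 HP3 Ne).
  have ef0 : mulK r u e f = 0 by apply: NJ; [apply: Nmul | apply: JM].
  by rewrite -{1}(mulK_unitr u HU e) ef mulK_addr ef0 addr0.
apply: inj_bij.
  exact: PhiK_lin.
move=> x y Pxy.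
have Nn : N (x - y) by rewrite /N PhiK_sub Pxy subrr.
have n0 : x - y = 0.
  rewrite -(mulK_unitr u HU (x - y)) ef eq0 add0r.
  by apply: NJ; [apply: Nmul | apply: JM].
by apply/eqP; rewrite -subr_eq0 n0.
Qed.
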